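(* Let $k$ be a field, $R = k[[X]]$, and $M$ a free $R$-module of rank $h$. Let $0 = M_0 \subseteq M_1 \subseteq \dots \subseteq M_l = M$ be direct summands with $M_i$ free of rank $h_i$ ($h_0 = 0$). Let $\overline{M_i} := M_i \otimes_R k$, let $\overline{L}$ be a $k$-subspace of $\overline{M}$, and $d_i := \dim_k(\overline{L} \cap \overline{M_i})$ (so $0 \leq d_{i+1} - d_i \leq h_{i+1} - h_i$). Let $d_0' = 0, d_1', \dots, d_l'$ be integers with $d_l' = d_l$, $0 \leq d_{i+1}' - d_i' \leq h_{i+1} - h_i$ for $0 \le i \le l-1$, and $d_i' \leq d_i$ for $1 \leq i \leq l-1$. Then there exists a direct summand $L \subseteq M$ with $L \otimes_R k = \overline{L}$ (as subspaces of $\overline{M}$) such that $\dim_{k((X))}\big((L \otimes_R k((X))) \cap (M_i \otimes_R k((X)))\big) = d_i'$ for all $1 \leq i \leq l$. *)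

(* Defs.v *)
From HB Require Import structures.
From mathcomp Require Import all_boot all_order all_algebra.
From mathcomp Require Import boolp zify.

Set Implicit Arguments.
Unset Strict Implicit.
Unset Printing Implicit Defensive.

Import Order.TTheory GRing.Theory Num.Theory.
Local Open Scope ring_scope.

Section FPS.
Variable k : fieldType.

Record fps := Fps { fcoef : nat -> k }.

HB.instance Definition _ := gen_eqMixin fps.
HB.instance Definition _ := gen_choiceMixin fps.

Lemma fpsP (f g : fps) : (forall n, fcoef f n = fcoef g n) -> f = g.
Proof. by case: f g => f [g] /= H; congr Fps; apply: funext. Qed.

Definition fps0 := Fps (fun _ => 0).
Definition fpsopp f := Fps (fun n => - fcoef f n).
Definition fpsadd f g := Fps (fun n => fcoef f n + fcoef g n).

Lemma fpsaddA : associative fpsadd.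
Proof. by move=> f g h; apply: fpsP => n /=; rewrite addrA. Qed.
Lemma fpsaddC : commutative fpsadd.
Proof. by move=> f g; apply: fpsP => n /=; rewrite addrC. Qed.
Lemma fpsadd0 : left_id fps0 fpsadd.
Proof. by move=> f; apply: fpsP => n /=; rewrite add0r. Qed.
Lemma fpsaddN : left_inverse fps0 fpsopp fpsadd.
Proof. by move=> f; apply: fpsP => n /=; rewrite addNr. Qed.

HB.instance Definition _ :=
  GRing.isZmodule.Build fps fpsaddA fpsaddC fpsadd0 fpsaddN.

Definition fpsmul f g :=
  Fps (fun n => \sum_(i < n.+1) fcoef f i * fcoef g (n - i)).
Definition fps1 := Fps (fun n => (n == 0)%:R).

Definition fps_trunc n f : {poly k} := \poly_(i < n.+1) fcoef f i.

Lemma coef_fps_trunc n f i : (i <= n)%N -> (fps_trunc n f)`_i = fcoef f i.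
Proof. by rewrite coef_poly ltnS => ->. Qed.

Lemma fpsmulE m n f g : (m <= n)%N ->
  fcoef (fpsmul f g) m = (fps_trunc n f * fps_trunc n g)`_m.
Proof.
move=> mn; rewrite coefM /=; apply: eq_bigr => i _.
have im : (i <= m)%N by rewrite -ltnS.
rewrite !coef_fps_trunc //; first exact: leq_trans (leq_subr _ _) mn.
exact: leq_trans im mn.
Qed.

Lemma fpsmul_coef f g n :
  fcoef (fpsmul f g) n = \sum_(i < n.+1) fcoef f i * fcoef g (n - i).
Proof. by []. Qed.

Lemma fpsmulA : associative fpsmul.
Proof.
move=> f g h; apply: fpsP => n.
transitivity ((fps_trunc n f * (fps_trunc n g * fps_trunc n h))`_n).
  rewrite fpsmul_coef coefM; apply: eq_bigr => i _.
  rewrite coef_fps_trunc ?(ltnSE (ltn_ord i)) //.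
  by rewrite (fpsmulE _ _ (leq_subr i n)).
rewrite mulrA coefM fpsmul_coef; apply: eq_bigr => i _.
rewrite (coef_fps_trunc h (leq_subr i n)).
by rewrite (fpsmulE _ _ (ltnSE (ltn_ord i))).
Qed.

Lemma fpsmulC : commutative fpsmul.
Proof.
by move=> f g; apply: fpsP => n; rewrite !(fpsmulE _ _ (leqnn n)) mulrC.
Qed.

Lemma fpsmul1 : left_id fps1 fpsmul.
Proof.
move=> f; apply: fpsP => n /=; rewrite big_ord_recl /= subn0 mul1r.
by rewrite big1 ?addr0 // => i _; rewrite mul0r.
Qed.

Lemma fpsmulDl : left_distributive fpsmul fpsadd.
Proof.
move=> f g h; apply: fpsP => n /=; rewrite -big_split /=.
by apply: eq_bigr => i _; rewrite mulrDl.
Qed.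

Lemma fps1_neq0 : fps1 != fps0.
Proof. by apply/eqP => /(f_equal (fcoef ^~ 0%N)) /= /eqP; rewrite oner_eq0. Qed.

HB.instance Definition _ :=
  GRing.Zmodule_isComNzRing.Build fps fpsmulA fpsmulC fpsmul1 fpsmulDl fps1_neq0.

Lemma fcoef0 n : fcoef (0 : fps) n = 0. Proof. by []. Qed.
Lemma fcoefM (f g : fps) n :
  fcoef (f * g) n = \sum_(i < n.+1) fcoef f i * fcoef g (n - i).
Proof. by []. Qed.

Definition fpsunit : {pred fps} := fun f => `[< exists g, g * f = 1 >].
Definition fpsinv (f : fps) : fps :=
  match pselect (exists g, g * f = 1) with
  | left H => projT1 (cid H)
  | right _ => f
  end.

Lemma fpsmulVx : {in fpsunit, left_inverse 1 fpsinv *%R}.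
Proof.
move=> f Hf; have {Hf} /asboolP H : fpsunit f := Hf.
by rewrite /fpsinv; case: pselect => // H'; case: (cid H').
Qed.

Lemma fpsunitPl (f g : fps) : g * f = 1 -> fpsunit f.
Proof. by move=> H; apply/asboolP; exists g. Qed.

Lemma fpsinv_out : {in [predC fpsunit], fpsinv =1 id}.
Proof.
move=> f Hf; have {Hf} H : ~~ fpsunit f := Hf.
by rewrite /fpsinv; case: pselect => // H'; case/negP: H; apply/asboolP.
Qed.

HB.instance Definition _ :=
  GRing.ComNzRing_hasMulInverse.Build fps fpsmulVx fpsunitPl fpsinv_out.

Lemma fps_nz_coef (f : fps) : f != 0 -> exists i, fcoef f i != 0.
Proof.
move=> f0; apply: contrapT => H; move/eqP: f0; apply.
apply: fpsP => i; rewrite fcoef0; apply/eqP; apply: contrapT => Hi.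
by apply: H; exists i; apply/negP.
Qed.

Lemma fps_integral : GRing.integral_domain_axiom fps.
Proof.
move=> x y xy0; apply/negPn/negP; rewrite negb_or => /andP[x0 y0].
case: (ex_minnP (fps_nz_coef x0)) => i xi imin.
case: (ex_minnP (fps_nz_coef y0)) => j yj jmin.
have: fcoef (x * y) (i + j) = fcoef x i * fcoef y j.
  rewrite fcoefM.
  have iij : (i < (i + j).+1)%N by rewrite ltnS leq_addr.
  rewrite (bigD1 (Ordinal iij)) //= addKn big1 ?addr0 // => a /eqP /= ai.
  have [lt_ai | lt_ia | eq_ai] := ltngtP a i.
  - have : fcoef x a == 0 by apply: contraTT lt_ai => /imin; rewrite leqNgt.
    by move/eqP => ->; rewrite mul0r.
  - have : fcoef y (i + j - a) == 0.
      apply: contraTT lt_ia => /jmin H; rewrite -leqNgt.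
      by have := ltn_ord a; lia.
    by move/eqP => ->; rewrite mulr0.
  - by case: ai; apply: val_inj.
rewrite xy0 fcoef0 => /esym /eqP; rewrite mulf_eq0 (negbTE xi) (negbTE yj).
by [].
Qed.

HB.instance Definition _ := GRing.ComUnitRing_isIntegral.Build fps fps_integral.

Definition fps_const_coef (f : fps) : k := fcoef f 0.

End FPS.

Notation "{ 'fps' k }" := (fps k) (format "{ 'fps'  k }") : type_scope.
Notation "{ 'laurent' k }" := {fraction (fps k)} (format "{ 'laurent'  k }") : type_scope.

(* Submodules of R^h are given by a matrix whose ROWS generate them. *)

(* A reduction of a matrix over k[[X]] modulo X (i.e. the image of (-) (x)_R k). *)
Definition red_mx (k : fieldType) (m n : nat) (A : 'M[{fps k}]_(m, n)) : 'M[k]_(m, n) :=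
  map_mx (@fps_const_coef k) A.

Definition ext_mx (k : fieldType) (m n : nat) (A : 'M[{fps k}]_(m, n))
  : 'M[{laurent k}]_(m, n) := map_mx (@tofrac _) A.

Definition submod (R : comNzRingType) (m n h : nat) (A : 'M[R]_(m, h)) (B : 'M[R]_(n, h))
  : Prop := exists C : 'M[R]_(m, n), A = C *m B.

(* The rows of A (r x h) form a basis of a direct summand of R^h: they can be
   completed (by the rows of some B) to a basis of R^h, i.e.
   R^h = rowspan A (+) rowspan B with the rows of A free. *)
Definition basis_of_direct_summand (R : comNzRingType) (r h : nat) (A : 'M[R]_(r, h))
  : Prop :=
  exists (B : 'M[R]_(h - r, h)) (P : 'M[R]_(h, r + (h - r))),
    P *m col_mx A B = 1%:M /\ col_mx A B *m P = 1%:M.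

(* Main.v *)
Require Import Defs.
From HB Require Import structures.
From mathcomp Require Import all_boot all_order all_algebra.
From mathcomp Require Import boolp zify.
Set Implicit Arguments.
Unset Strict Implicit.
Unset Printing Implicit Defensive.
Import Order.TTheory GRing.Theory Num.Theory.
Local Open Scope ring_scope.

Section FpsFacts.
Variable k : fieldType.
Local Notation R := {fps k}.

Lemma cc_sub : zmod_morphism (@fps_const_coef k).
Proof. by move=> f g. Qed.
HB.instance Definition _ := GRing.isZmodMorphism.Build R k (@fps_const_coef k) cc_sub.
Lemma cc_mon : monoid_morphism (@fps_const_coef k).
Proof.
split; first by [].
by move=> f g; rewrite /fps_const_coef fcoefM big_ord1 subn0.
Qed.
HB.instance Definition _ := GRing.isMonoidMorphism.Build R k (@fps_const_coef k) cc_mon.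

Definition pfps (p : {poly k}) : R := Fps (fun n => p`_n).
Lemma pfps_sub : zmod_morphism pfps.
Proof. by move=> p q; apply: fpsP => n /=; rewrite coefB. Qed.
HB.instance Definition _ := GRing.isZmodMorphism.Build {poly k} R pfps pfps_sub.
Lemma pfps_mon : monoid_morphism pfps.
Proof.
split; first by apply: fpsP => n /=; rewrite coef1.
by move=> p q; apply: fpsP => n /=; rewrite coefM.
Qed.
HB.instance Definition _ := GRing.isMonoidMorphism.Build {poly k} R pfps pfps_mon.

Lemma pfps_inj : injective pfps.
Proof.
move=> p q /(f_equal (@fcoef k)) e; apply/polyP => n.
by have := congr1 (fun f => f n) e.
Qed.

Lemma cc_pfps p : fps_const_coef (pfps p) = p`_0.
Proof. by []. Qed.

Section Inv.
Variable f : R.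
Let a := (fcoef f 0)^-1.
Fixpoint gseq (n : nat) : seq k := match n with
  | 0 => [:: a]
  | n'.+1 => let s := gseq n' in
      rcons s (- a * \sum_(i < n'.+1) fcoef f i.+1 * nth 0 s (n' - i)) end.
Lemma size_gseq n : size (gseq n) = n.+1.
Proof. by elim: n => //= n IH; rewrite size_rcons IH. Qed.
Lemma nth_gseq m n : (n <= m)%N -> nth 0 (gseq m) n = nth 0 (gseq n) n.
Proof.
elim: m => [|m IH]; first by rewrite leqn0 => /eqP ->.
rewrite leq_eqVlt => /orP[/eqP -> //|]; rewrite ltnS => nm.
by rewrite /= nth_rcons size_gseq ltnS nm IH.
Qed.
Definition ginv := Fps (fun n => nth 0 (gseq n) n).
Lemma ginvS n : fcoef ginv n.+1 = - a * \sum_(i < n.+1) fcoef f i.+1 * fcoef ginv (n - i).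
Proof.
rewrite /= nth_rcons size_gseq ltnn eqxx; congr (_ * _); apply: eq_bigr => i _.
by rewrite nth_gseq // leq_subr.
Qed.
Lemma ginvP : fcoef f 0 != 0 -> f * ginv = 1.
Proof.
move=> f0; apply: fpsP => -[|n].
  by rewrite fcoefM big_ord1 /= /a mulfV.
rewrite fcoefM big_ord_recl subn0 ginvS /=.
rewrite mulrA /a mulrN mulfV // mulN1r.
idtac.
by rewrite addrC; apply/eqP; rewrite subr_eq0; apply/eqP; apply: eq_bigr => i _; rewrite /bump /= add1n subSS.
Qed.
End Inv.

Lemma fps_unitP (f : R) : fps_const_coef f != 0 -> f \is a GRing.unit.
Proof.
move=> f0; apply/unitrPr; exists (ginv f); exact: ginvP.
Qed.

End FpsFacts.
Section MxFps.
Variable k : fieldType.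
Local Notation R := {fps k}.

Lemma red_unit n (A : 'M[R]_n) : red_mx A \in unitmx -> A \in unitmx.
Proof.
rewrite !unitmxE /red_mx det_map_mx unitfE => H; exact: fps_unitP.
Qed.

Lemma sq_inv s h (e : s = h) (N : 'M[R]_(s,h)) :
  row_free (red_mx N) -> exists P : 'M_(h,s), P *m N = 1%:M /\ N *m P = 1%:M.
Proof.
subst s => rf; have U : N \in unitmx by apply: red_unit; rewrite -row_free_unit.
by exists (invmx N); split; [exact: mulVmx | exact: mulmxV].
Qed.

Definition cst (c : k) : R := pfps c%:P.
Definition cst_mx m n (A : 'M[k]_(m,n)) : 'M[R]_(m,n) := map_mx cst A.
Lemma red_cst_mx m n (A : 'M[k]_(m,n)) : red_mx (cst_mx A) = A.
Proof. by apply/matrixP => i j; rewrite !mxE /= coefC. Qed.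

Lemma cast_rows (F : fieldType) m m' n (A : 'M[F]_(m,n)) :
  m = m' -> exists A' : 'M_(m',n), (A' == A)%MS.
Proof. by move=> e; subst m'; exists A; apply/eqmxP; exact: eqmx_refl. Qed.

Lemma bds_of_red r h (A : 'M[R]_(r,h)) :
  row_free (red_mx A) -> basis_of_direct_summand A.
Proof.
move=> rf; have rh : (r <= h)%N by rewrite -(eqP rf) rank_leq_col.
have [B' eqB] := @cast_rows _ _ (h - r)%N _ (row_base ((red_mx A)^C)%MS)
  (etrans (@mxrank_compl _ _ _ (red_mx A)) (congr1 (subn h) (eqP rf))).
have e : (r + (h - r))%N = h by rewrite subnKC.
have [|P [P1 P2]] := @sq_inv _ _ e (col_mx A (cst_mx B')).
  have -> : red_mx (col_mx A (cst_mx B')) = col_mx (red_mx A) B'.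
    by rewrite /red_mx map_col_mx; congr col_mx; exact: red_cst_mx.
  rewrite /row_free -(addsmxE (red_mx A) B').1 e -/(row_full _).
  have H : (red_mx A + B' :=: red_mx A + (red_mx A)^C)%MS.
    by apply: adds_eqmx => //; apply: eqmx_trans (eq_row_base _); apply/eqmxP.
  by rewrite /row_full H.1; exact: addsmx_compl_full.
by exists (cst_mx B'), P.
Qed.

Lemma red_of_bds r h (A : 'M[R]_(r,h)) :
  basis_of_direct_summand A -> (r <= h)%N /\ row_free (red_mx A).
Proof.
move=> [B [P [_ H2]]].
have H := congr1 (@red_mx k _ _) H2.
rewrite /red_mx map_mxM map_mx1 map_col_mx -!/(red_mx _) in H.
have s1 : (r + (h - r) <= \rank (col_mx (red_mx A) (red_mx B)))%N.
  by rewrite -{1}(mxrank1 k (r + (h - r))) -H mxrankM_maxl.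
have s2 := rank_leq_col (col_mx (red_mx A) (red_mx B)).
have s3 := rank_leq_row (red_mx B).
have s4 := rank_leq_row (red_mx A).
have s5 : (\rank (col_mx (red_mx A) (red_mx B)) <= \rank (red_mx A) + \rank (red_mx B))%N.
  by rewrite -(addsmxE (red_mx A) (red_mx B)).1 mxrank_adds_leqif.
split; first by lia.
by rewrite /row_free; apply/eqP; lia.
Qed.

End MxFps.

Section Flag.
Variables (F : fieldType) (h : nat).

Lemma ord_neq m (i q : 'I_m) : q != i -> (i == q :> nat) = false.
Proof. by move=> qi; apply/eqP => e; case/eqP: qi; apply: val_inj. Qed.

Lemma mul_pidl r m (A : 'M[F]_(h,m)) i j :
  ((pid_mx r : 'M_h) *m A) i j = ((i < r)%N)%:R * A i j.
Proof.
rewrite !mxE (bigD1 i) //= big1 ?addr0; first by rewrite !mxE eqxx.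
by move=> q qi; rewrite !mxE ord_neq // mul0r.
Qed.

Lemma mul_pidr r m (A : 'M[F]_(m,h)) i j :
  (A *m (pid_mx r : 'M_h)) i j = A i j * ((j < r)%N)%:R.
Proof.
rewrite !mxE (bigD1 j) //= big1 ?addr0; first by rewrite !mxE eqxx.
by move=> q qi; rewrite !mxE (ord_neq (m:=h) (i := q) (q := j)) ?mulr0 // eq_sym.
Qed.

Definition Place n0 m : 'M[F]_(h, m) := \matrix_(p, a) ((p : nat) == (n0 + a)%N)%:R.

Lemma pid_Place n' n0 m : (n0 + m <= n')%N ->
  (pid_mx n' : 'M_h) *m Place n0 m = Place n0 m.
Proof.
move=> le; apply/matrixP => i j; rewrite mul_pidl !mxE.
case: eqP => [->|_]; last by rewrite mulr0.
by have := ltn_ord j => jm; rewrite (_ : (n0 + j < n')%N) ?mulr1 //; lia.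
Qed.

Lemma pid_Place0 n' n0 m : (n' <= n0)%N ->
  (pid_mx n' : 'M_h) *m Place n0 m = 0.
Proof.
move=> le; apply/matrixP => i j; rewrite mul_pidl !mxE.
case: eqP => [->|_]; last by rewrite mulr0.
by rewrite (_ : (n0 + j < n')%N = false) ?mul0r //; apply/negbTE; rewrite -leqNgt; lia.
Qed.

Lemma Place_inj n0 m : (n0 + m <= h)%N -> (Place n0 m)^T *m Place n0 m = 1%:M.
Proof.
move=> le; apply/matrixP => a b; rewrite !mxE.
have lt : (n0 + a < h)%N by have := ltn_ord a; lia.
rewrite (bigD1 (Ordinal lt)) //= big1 ?addr0.
  by rewrite !mxE eqxx mul1r eqn_add2l.
move=> q qa; rewrite !mxE; case: eqP => [e|]; last by rewrite mul0r.
by case/eqP: qa; apply: val_inj.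
Qed.

Lemma Place_eq n0 m (B : 'M[F]_(m, h)) : (n0 + m <= h)%N -> (Place n0 m *m B == B)%MS.
Proof.
move=> le; apply/andP; split; first exact: submxMl.
by rewrite -{1}[B]mul1mx -(Place_inj le) -mulmxA submxMl.
Qed.

Lemma diff_adds m1 m2 (A : 'M[F]_(m1,h)) (B : 'M[F]_(m2,h)) : (B <= A)%MS ->
  (B + (A :\: B) :=: A)%MS.
Proof.
move=> BA; rewrite addsmxC; apply: eqmx_trans (addsmx_diff_cap_eq A B).
by apply: adds_eqmx => //; apply: eqmx_sym; apply/capmx_idPr.
Qed.

Lemma rank_diff m1 m2 (A : 'M[F]_(m1,h)) (B : 'M[F]_(m2,h)) : (B <= A)%MS ->
  \rank (A :\: B)%MS = (\rank A - \rank B)%N.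
Proof.
move=> BA; have := mxrank_disjoint_sum (capmx_diff A B).
rewrite addsmxC (diff_adds BA).1 => e; lia.
Qed.

Section FlagConstr.
Variables (l : nat) (W : nat -> 'M[F]_h).
Hypothesis W0 : \rank (W 0) = 0%N.
Hypothesis Wmono : forall i, (i < l)%N -> (W i <= W i.+1)%MS.
Hypothesis Wfull : row_full (W l).

Let n i := \rank (W i).
Lemma n_mono i j : (i <= j <= l)%N -> (n i <= n j)%N.
Proof.
move=> /andP[ij jl]; elim: j ij jl => [|j IH]; first by rewrite leqn0 => /eqP ->.
rewrite leq_eqVlt => /orP[/eqP -> //|]; rewrite ltnS => ij jl.
apply: leq_trans (IH ij (ltnW jl)) _; exact: mxrankS (Wmono jl).
Qed.

Let B i := row_base (W i :\: W i.-1)%MS.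
Let rk i := \rank (W i :\: W i.-1)%MS.
Lemma rk_eq i : (i < l)%N -> rk i.+1 = (n i.+1 - n i)%N.
Proof. by move=> il; rewrite /rk rank_diff //= Wmono. Qed.
Let PB i := Place (n i.-1) (rk i) *m B i.
Let T i := \sum_(0 <= j < i) PB j.+1.

Lemma pidT i j : (i <= j <= l)%N -> (pid_mx (n j) : 'M_h) *m T i = T i.
Proof.
move=> /andP[ij jl]; rewrite /T mulmx_sumr; apply: eq_big_nat => q /andP[_ qi].
rewrite /PB mulmxA pid_Place //= rk_eq; last by lia.
have := n_mono (_ : (q.+1 <= j <= l)%N); have := n_mono (_ : (q <= q.+1 <= l)%N).
by lia.
Qed.

Lemma pidT0 i j : (j <= i <= l)%N -> (pid_mx (n j) : 'M_h) *m PB i.+1 = 0.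
Proof.
move=> /andP[ji il]; rewrite /PB mulmxA pid_Place0 ?mul0mx //=.
by apply: n_mono; lia.
Qed.

Lemma T_eq i : (i <= l)%N -> (T i == W i)%MS.
Proof.
elim: i => [_|i IH il].
  have -> : W 0 = 0 by apply/eqP; rewrite -mxrank_eq0 W0.
  by rewrite /T big_geq //; apply/eqmxP; exact: eqmx_refl.
have TS : T i.+1 = T i + PB i.+1 by rewrite /T big_nat_recr.
have P1 : (pid_mx (n i) : 'M_h) *m T i.+1 = T i.
  by rewrite TS mulmxDr pidT ?pidT0 ?addr0 ?leqnn ?(ltnW il).
have P2 : ((pid_mx (n i.+1) : 'M_h) - pid_mx (n i)) *m T i.+1 = PB i.+1.
  by rewrite mulmxBl P1 pidT ?leqnn ?il // TS addrC addKr.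
have hle : (n i.+1 <= h)%N by rewrite rank_leq_col.
have ni : (n i <= n i.+1)%N by apply: n_mono; rewrite leqnSn.
apply/eqmxP; apply: (eqmx_trans (B := (T i + B i.+1)%MS)).
  apply/eqmxP; apply/andP; split.
    rewrite TS; apply: addmx_sub_adds => //; exact: submxMl.
  rewrite addsmx_sub; apply/andP; split; first by rewrite -P1 submxMl.
  apply: submx_trans (_ : (PB i.+1 <= _)%MS); last by rewrite -P2 submxMl.
  have /andP[_ ->] // : (Place (n i.+1.-1) (rk i.+1) *m B i.+1 == B i.+1)%MS.
  apply: Place_eq; have := rk_eq il; rewrite /rk /n /= => ->; move: hle ni; rewrite /n; lia.
apply: eqmx_trans (diff_adds (Wmono il)).
apply: adds_eqmx; first by apply/eqmxP; apply: IH; exact: ltnW.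
exact: eq_row_base.
Qed.

Lemma pidTl i : (i <= l)%N -> (pid_mx (n i) : 'M_h) *m T l = T i.
Proof.
move=> il; rewrite /T (big_cat_nat (n := i)) //= mulmxDr.
rewrite -/(T i) pidT ?leqnn ?il // mulmx_sumr big1_seq ?addr0 // => j.
rewrite mem_index_iota => /andP[ij jl]; apply: pidT0; lia.
Qed.

Lemma flag_core : exists Q : 'M[F]_h, Q \in unitmx /\
  forall i, (i <= l)%N -> ((pid_mx (\rank (W i)) : 'M_h) *m Q == W i)%MS.
Proof.
exists (T l); split.
  rewrite -row_full_unit /row_full (eqmx_rank (T_eq (leqnn l))).
  exact: Wfull.
by move=> i il; rewrite (pidTl il) T_eq.
Qed.
End FlagConstr.
End Flag.

Section Combi.
Variables (l h r : nat) (hs d' : nat -> nat).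
Hypothesis Hd0 : d' 0 = 0%N.
Hypothesis Hdl : d' l = r.
Hypothesis Hhl : hs l = h.
Hypothesis Hstep : forall i, (i < l)%N ->
     (d' i <= d' i.+1)%N /\ (d' i.+1 + hs i <= d' i + hs i.+1)%N.

Lemma mono_dh i j : (i <= j <= l)%N -> (d' i <= d' j)%N /\ (hs i <= hs j)%N.
Proof.
move=> /andP[ij jl]; elim: j ij jl => [|j IH]; first by rewrite leqn0 => /eqP ->.
rewrite leq_eqVlt => /orP[/eqP -> //|]; rewrite ltnS => ij jl.
have [H1 H2] := IH ij (ltnW jl); have [H3 H4] := Hstep jl; lia.
Qed.

Definition tt_ (j : nat) := find (fun i => (j < d' i)%N) (iota 0 l.+1).
Definition pp (j : nat) := (hs (tt_ j).-1 + (j - d' (tt_ j).-1))%N.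

Lemma tt_spec j : (j < r)%N ->
  [/\ (1 <= tt_ j <= l)%N, (d' (tt_ j).-1 <= j)%N, (j < d' (tt_ j))%N
    & forall i, (i <= l)%N -> (j < d' i)%N = (tt_ j <= i)%N].
Proof.
move=> jr.
have hs1 : has (fun i => (j < d' i)%N) (iota 0 l.+1).
  by apply/hasP; exists l; rewrite ?mem_iota ?Hdl // add0n ltnSn.
have tl : (tt_ j < l.+1)%N by move: hs1; rewrite has_find size_iota.
have nt := nth_find 0 hs1; rewrite nth_iota // add0n -/(tt_ j) in nt.
have bf i : (i < tt_ j)%N -> (j < d' i)%N = false.
  move=> it; have := before_find 0 it; rewrite nth_iota ?add0n //; lia.
have t1 : (1 <= tt_ j)%N.
  by rewrite lt0n; apply/negP => /eqP t0; move: nt; rewrite t0 Hd0.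
split => //.
- by rewrite t1 -ltnS.
- rewrite leqNgt bf //; lia.
- move=> i il; case: (leqP (tt_ j) i) => ti.
    have tij : (tt_ j <= i <= l)%N by rewrite ti il.
    have [H _] := mono_dh tij.
    by apply: leq_trans nt H.
  exact: bf.
Qed.

Lemma pp_spec j : (j < r)%N ->
  (hs (tt_ j).-1 <= pp j)%N /\ (pp j < hs (tt_ j))%N.
Proof.
move=> jr; have [/andP[t1 tl] H1 H2 _] := tt_spec jr.
have tl1 : ((tt_ j).-1 < l)%N by lia.
have := Hstep tl1; rewrite prednK // /pp => -[_]; lia.
Qed.

Lemma pp_lt_h j : (j < r)%N -> (pp j < h)%N.
Proof.
move=> jr; have [/andP[t1 tl] _ _ _] := tt_spec jr; have [_ H] := pp_spec jr.
have tll : (tt_ j <= l <= l)%N by rewrite tl leqnn.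
have [_ H2] := mono_dh tll.
by rewrite -Hhl; lia.
Qed.

Lemma pp_low i j : (i <= l)%N -> (j < r)%N -> (j < d' i)%N -> (pp j < hs i)%N.
Proof.
move=> il jr ji; have [_ _ _ H] := tt_spec jr; rewrite (H i il) in ji.
have [_ H2] := pp_spec jr.
have tij : (tt_ j <= i <= l)%N by rewrite ji il.
have [_ H3] := mono_dh tij.
lia.
Qed.

Lemma pp_high i j : (i <= l)%N -> (j < r)%N -> (d' i <= j)%N -> (hs i <= pp j)%N.
Proof.
move=> il jr ji; have [/andP[t1 tl] _ _ H] := tt_spec jr.
have ti : (i < tt_ j)%N by rewrite ltnNge -(H i il) -leqNgt.
have [H2 _] := pp_spec jr.
have tij : (i <= (tt_ j).-1 <= l)%N by apply/andP; lia.
have [_ H3] := mono_dh tij.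
lia.
Qed.

Lemma pp_inj j j' : (j < r)%N -> (j' < r)%N -> pp j = pp j' -> j = j'.
Proof.
move=> jr jr' e.
have [/andP[t1 tl] a1 a2 _] := tt_spec jr; have [/andP[t1' tl'] b1 b2 _] := tt_spec jr'.
have [c1 c2] := pp_spec jr; have [c1' c2'] := pp_spec jr'.
case: (ltngtP (tt_ j) (tt_ j')) => tt.
- have tij : (tt_ j <= (tt_ j').-1 <= l)%N by apply/andP; lia.
  have [_ H] := mono_dh tij.
  lia.
- have tij : (tt_ j' <= (tt_ j).-1 <= l)%N by apply/andP; lia.
  have [_ H] := mono_dh tij.
  lia.
- by move: e a1; rewrite /pp tt; lia.
Qed.
End Combi.

Section PidEntries.
Variable R : pzRingType.
Lemma mulpidl n m r' (A : 'M[R]_(n,m)) i j :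
  ((pid_mx r' : 'M_n) *m A) i j = ((i < r')%N)%:R * A i j.
Proof.
rewrite !mxE (bigD1 i) //= big1 ?addr0; first by rewrite !mxE eqxx.
by move=> q qi; rewrite !mxE ord_neq // mul0r.
Qed.
Lemma mulpidr n m r' (A : 'M[R]_(m,n)) i j :
  (A *m (pid_mx r' : 'M_n)) i j = A i j * ((j < r')%N)%:R.
Proof.
rewrite !mxE (bigD1 j) //= big1 ?addr0; first by rewrite !mxE eqxx.
by move=> q qi; rewrite !mxE (@ord_neq _ q j) ?mulr0 // eq_sym.
Qed.
Lemma mulcopidr n m r' (A : 'M[R]_(m,n)) i j :
  (A *m (copid_mx r' : 'M_n)) i j = A i j * ((r' <= j)%N)%:R.
Proof.
rewrite /copid_mx mulmxBr mulmx1 mxE.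
have -> : (- (A *m (pid_mx r' : 'M_n))) i j = - (A *m (pid_mx r' : 'M_n)) i j by rewrite mxE.
rewrite mulpidr.
by case: (ltnP j r') => _; rewrite ?mulr0 ?mulr1 ?subr0 ?subrr.
Qed.
End PidEntries.

Lemma rank_mxsub (F : fieldType) m n m' n' (f : 'I_m' -> 'I_m) (g : 'I_n' -> 'I_n)
  (A : 'M[F]_(m,n)) : (\rank (mxsub f g A) <= \rank A)%N.
Proof.
have -> : mxsub f g A = (rowsub g (rowsub f A)^T)^T.
  by apply/matrixP => i j; rewrite !mxE.
rewrite mxrank_tr rowsubE; apply: leq_trans (mxrankM_maxr _ _) _.
rewrite mxrank_tr rowsubE; exact: mxrankM_maxr.
Qed.

Lemma lt_sub_add d r (a : 'I_(r - d)) : (d + a < r)%N.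
Proof. by have := ltn_ord a; lia. Qed.

Section RankComp.
Variable k : fieldType.
Variables (l h r : nat) (hs d' : nat -> nat).
Hypothesis Hd0 : d' 0 = 0%N.
Hypothesis Hdl : d' l = r.
Hypothesis Hhl : hs l = h.
Hypothesis Hstep : forall i, (i < l)%N ->
     (d' i <= d' i.+1)%N /\ (d' i.+1 + hs i <= d' i + hs i.+1)%N.
Variable C : 'M[k]_(r,h).
Hypothesis HC : forall i, (i <= l)%N ->
  (pid_mx (d' i) : 'M_r) *m C *m (copid_mx (hs i) : 'M_h) = 0.

Local Notation ppj := (pp l hs d').
Definition Emx : 'M[k]_(r,h) := \matrix_(j, q) ((q : nat) == ppj j)%:R.
Definition Lp : 'M[{poly k}]_(r,h) := map_mx polyC C + 'X *: map_mx polyC Emx.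

Lemma red_Lp : red_mx (map_mx (@pfps k) Lp) = C.
Proof.
apply/matrixP => j q; rewrite !mxE /fps_const_coef /=.
by rewrite coefD coefC coefXM /= addr0.
Qed.

Lemma Lp_up i : (i <= l)%N ->
  (pid_mx (d' i) : 'M_r) *m (Lp *m (copid_mx (hs i) : 'M_h)) = 0.
Proof.
move=> il; apply/matrixP => j q; rewrite mulpidl mulcopidr !mxE.
case: (ltnP j (d' i)) => ji; last by rewrite mul0r.
rewrite mul1r.
have := congr1 (fun M : 'M[k]_(r,h) => M j q) (HC il); rewrite mulcopidr mulpidl ji mul1r mxE.
case: (leqP (hs i) q) => hq; last by rewrite !mulr0.
rewrite !mulr1 => ->; rewrite add0r.
have jr : (j < r)%N by [].
have := pp_low Hd0 Hdl Hhl Hstep il jr ji.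
by case: eqP => [<-|]; rewrite ?mulr0 //; lia.
Qed.

Definition ppo (j : 'I_r) : 'I_h := Ordinal (pp_lt_h Hd0 Hdl Hhl Hstep (ltn_ord j)).

Section Fixi.
Variable i : nat.
Hypothesis il : (i <= l)%N.
Let m := (r - d' i)%N.
Let f (a : 'I_m) : 'I_r := Ordinal (lt_sub_add a).
Let g (b : 'I_m) : 'I_h := ppo (f b).

Lemma N_eq : mxsub f g (Lp *m (copid_mx (hs i) : 'M_h))
   = 'X%:M + map_mx polyC (mxsub f g C).
Proof.
apply/matrixP => a b; rewrite mxE mulcopidr !mxE /=.
have bhi : (hs i <= ppj (d' i + b))%N.
  exact: (pp_high Hd0 Hdl Hhl Hstep il (lt_sub_add b) (leq_addr _ _)).
rewrite bhi mulr1 addrC; congr (_ + _).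
have -> : (ppj (d' i + b) == ppj (d' i + a)) = (a == b).
  apply/eqP/eqP => [e|->//]; apply: val_inj => /=.
  have := pp_inj Hd0 Hdl Hhl Hstep (lt_sub_add b) (lt_sub_add a) e.
  by move/eqP; rewrite eqn_add2l => /eqP ->.
by case: (a == b); rewrite ?mulr1n ?mulr0n ?polyC1 ?polyC0 ?mulr1 ?mulr0.
Qed.

Lemma det_N : \det (mxsub f g (Lp *m (copid_mx (hs i) : 'M_h))) != 0.
Proof.
rewrite N_eq; have := char_poly_monic (- mxsub f g C).
rewrite /char_poly /char_poly_mx map_mxN opprK => /monic_neq0.
done.
Qed.

Variables (K : fieldType) (psi : {rmorphism {poly k} -> K}).
Hypothesis psi_inj : injective psi.

Lemma rank_Lp : \rank (map_mx psi (Lp *m (copid_mx (hs i) : 'M_h))) = m.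
Proof.
have dr : (d' i <= r)%N.
  have il' : (i <= l <= l)%N by rewrite il leqnn.
  by have [H _] := mono_dh Hd0 Hdl Hhl Hstep il'; rewrite -Hdl.
apply/eqP; rewrite eqn_leq; apply/andP; split.
  have e : Lp *m (copid_mx (hs i) : 'M_h) =
     (copid_mx (d' i) : 'M_r) *m (Lp *m (copid_mx (hs i) : 'M_h)).
    by rewrite /copid_mx [in RHS]mulmxBl mul1mx Lp_up // subr0.
  rewrite e map_mxM; apply: leq_trans (mxrankM_maxl _ _) _.
  by rewrite /copid_mx map_mxB map_mx1 map_pid_mx -/(copid_mx _) rank_copid_mx.
apply: leq_trans (rank_mxsub f g _).
have -> : mxsub f g (map_mx psi (Lp *m (copid_mx (hs i) : 'M_h)))
   = map_mx psi (mxsub f g (Lp *m (copid_mx (hs i) : 'M_h))).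
  by apply/matrixP => a b; rewrite !mxE.
rewrite mxrank_unit // unitmxE det_map_mx unitfE.
apply/eqP => e; move/eqP: det_N; apply; apply: psi_inj; rewrite e rmorph0 //.
Qed.
End Fixi.
End RankComp.

Lemma pidpid (R : pzRingType) h a b : (a <= h)%N -> (b <= h)%N ->
  (pid_mx a : 'M[R]_h) *m (pid_mx b : 'M_h) = pid_mx (minn a b).
Proof.
move=> ah bh; rewrite mul_pid_mx; congr pid_mx.
by apply/minn_idPr; rewrite geq_min ah.
Qed.

Section Lift.
Variable k : fieldType.
Local Notation R := {fps k}.
Variables (h l : nat) (hs : nat -> nat) (Ms : forall i, 'M[R]_(hs i, h)).
Hypothesis hs0 : hs 0 = 0%N.
Hypothesis hsl : hs l = h.
Hypothesis hmono : forall i j, (i <= j <= l)%N -> (hs i <= hs j)%N.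
Hypothesis Hsub : forall i, (i < l)%N -> submod (Ms i) (Ms i.+1).
Variable Qbar : 'M[k]_h.
Hypothesis HQ : forall i, (i <= l)%N -> ((pid_mx (hs i) : 'M_h) *m Qbar <= red_mx (Ms i))%MS.

Lemma hs_le_h i : (i <= l)%N -> (hs i <= h)%N.
Proof. by move=> il; rewrite -hsl; apply: hmono; rewrite il leqnn. Qed.

Let Y i : 'M[R]_(h, hs i) :=
  cst_mx ((pid_mx (hs i) : 'M_h) *m Qbar *m pinvmx (red_mx (Ms i))).
Let D i : 'M[R]_h := pid_mx (hs i.+1) - pid_mx (hs i).
Let Q := \sum_(0 <= j < l) D j *m (Y j.+1 *m Ms j.+1).

Lemma pidD i j : (i <= l)%N -> (j < l)%N ->
  (pid_mx (hs i) : 'M[R]_h) *m D j = if (j < i)%N then D j else 0.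
Proof.
move=> il jl; rewrite /D mulmxBr !pidpid ?hs_le_h //; last exact: ltnW.
case: ltnP => ji.
  have h1 : (hs j.+1 <= hs i)%N by apply: hmono; rewrite ji il.
  have h2 : (hs j <= hs i)%N by apply: hmono; rewrite (ltnW ji) il.
  by rewrite (minn_idPr h1) (minn_idPr h2).
have h1 : (hs i <= hs j.+1)%N by apply: hmono; rewrite (leq_trans ji (leqnSn _)) jl.
have h2 : (hs i <= hs j)%N by apply: hmono; rewrite ji ltnW.
by rewrite (minn_idPl h1) (minn_idPl h2) subrr.
Qed.

Lemma pidQ i : (i <= l)%N ->
  (pid_mx (hs i) : 'M[R]_h) *m Q = \sum_(0 <= j < i) D j *m (Y j.+1 *m Ms j.+1).
Proof.
move=> il; rewrite /Q mulmx_sumr (big_cat_nat (n := i)) //=.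
rewrite [X in _ + X]big1_seq ?addr0.
  apply: eq_big_nat => j /andP[_ ji].
  by rewrite mulmxA pidD ?ji // (leq_trans ji il).
move=> j; rewrite mem_index_iota => /andP[ij jl].
rewrite mulmxA pidD //; last by lia.
by rewrite (_ : (j < i)%N = false) ?mul0mx //; apply/negbTE; rewrite -leqNgt; lia.
Qed.

Lemma partial_sub i : (i <= l)%N -> exists Z : 'M[R]_(h, hs i),
  \sum_(0 <= j < i) D j *m (Y j.+1 *m Ms j.+1) = Z *m Ms i.
Proof.
elim: i => [_|i IH il]; first by exists 0; rewrite big_geq // mul0mx.
have [Z eZ] := IH (ltnW il); have [Cc eC] := Hsub il.
exists (Z *m Cc + D i *m Y i.+1).
by rewrite big_nat_recr //= eZ eC mulmxDl !mulmxA.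
Qed.

Lemma red_Q : red_mx Q = Qbar.
Proof.
rewrite /Q /red_mx raddf_sum /=.
have -> : \sum_(0 <= i < l) map_mx (@fps_const_coef k) (D i *m (Y i.+1 *m Ms i.+1))
   = \sum_(0 <= i < l) ((pid_mx (hs i.+1) : 'M[k]_h) - pid_mx (hs i)) *m Qbar.
  apply: eq_big_nat => i /andP[_ il].
  rewrite !map_mxM /D map_mxB !map_pid_mx -/(red_mx _) red_cst_mx -/(red_mx _).
  rewrite mulmxKpV ?HQ // mulmxA mulmxBl !pidpid ?hs_le_h ?(ltnW il) //.
  by rewrite minnn (minn_idPl _) //; apply: hmono; rewrite leqnSn il.
rewrite -mulmx_suml telescope_sumr // hsl hs0 pid_mx_0 subr0 pid_mx_1 mul1mx.
done.
Qed.

Lemma lift_Q : exists Q : 'M[R]_h, red_mx Q = Qbar /\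
  forall i, (i <= l)%N -> exists Z : 'M[R]_(h, hs i), pid_mx (hs i) *m Q = Z *m Ms i.
Proof.
exists Q; split; first exact: red_Q.
by move=> i il; rewrite pidQ //; apply: partial_sub.
Qed.
End Lift.

Lemma flag_gen (F : fieldType) h l (W : nat -> 'M[F]_h) :
  \rank (W 0) = 0%N -> (forall i, (i < l)%N -> (W i <= W i.+1)%MS) ->
  exists Q : 'M[F]_h, Q \in unitmx /\
  forall i, (i <= l)%N -> ((pid_mx (\rank (W i)) : 'M_h) *m Q == W i)%MS.
Proof.
move=> W0 Wm.
pose W' i := if (i <= l)%N then W i else 1%:M.
have H1 : \rank (W' 0) = 0%N by rewrite /W' leq0n.
have H2 : forall i, (i < l.+1)%N -> (W' i <= W' i.+1)%MS.
  move=> i il; rewrite /W'; case: (ltngtP i l) => il'.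
  + exact: Wm.
  + exact: submx_refl.
  + by rewrite ?il' ?leqnn ?ltnn ?ltnSn ?submx1.
have H3 : row_full (W' l.+1) by rewrite /W' ltnn row_full_unit unitmx1.
have [Q [QU HQ]] := flag_core H1 H2 H3.
exists Q; split => // i il; have := HQ i (leq_trans il (leqnSn _)).
by rewrite /W' il.
Qed.

Lemma cap_rankM (F : fieldType) n m1 m2 (A : 'M[F]_(m1,n)) (B : 'M[F]_(m2,n))
  (Q : 'M[F]_n) : Q \in unitmx ->
  \rank ((A *m Q) :&: (B *m Q))%MS = \rank (A :&: B)%MS.
Proof.
move=> QU; have rf : row_free Q by rewrite row_free_unit.
have e1 := mxrank_sum_cap (A *m Q) (B *m Q).
have e2 := mxrank_sum_cap A B.
rewrite -(addsmxMr A B Q).1 !mxrankMfree // in e1.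
lia.
Qed.

Lemma sum_pid_rank (F : fieldType) m n (A : 'M[F]_(m,n)) c : (c <= n)%N ->
  \rank (A + (pid_mx c : 'M_n))%MS = (\rank (A *m copid_mx c) + c)%N.
Proof.
move=> cn.
have eA : A = A *m copid_mx c + A *m pid_mx c.
  by rewrite /copid_mx mulmxBr mulmx1 subrK.
have E : (A + (pid_mx c : 'M_n) :=: A *m copid_mx c + (pid_mx c : 'M_n))%MS.
  apply/eqmxP/andP; split; rewrite addsmx_sub; apply/andP; split.
  - rewrite {1}eA; apply: addmx_sub; first exact: addsmxSl.
    by apply: submx_trans (addsmxSr _ _); exact: submxMl.
  - exact: addsmxSr.
  - rewrite /copid_mx mulmxBr mulmx1; apply: addmx_sub; first exact: addsmxSl.
    rewrite eqmx_opp; apply: submx_trans (addsmxSr _ _); exact: submxMl.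
  - exact: addsmxSr.
rewrite E.1 mxrank_disjoint_sum ?rank_pid_mx //.
set X := (_ :&: _)%MS.
have X1 : X *m copid_mx c = 0.
  have /submxP[D ->] : (X <= (pid_mx c : 'M_n))%MS by apply: capmxSr.
  by rewrite -mulmxA mul_pid_mx_copid ?mulmx0.
have X2 : X *m copid_mx c = X.
  have /submxP[D ->] : (X <= A *m copid_mx c)%MS by apply: capmxSl.
  by rewrite -!mulmxA copid_mx_id.
by rewrite -X2 X1.
Qed.

Lemma ext_mx1 (k : fieldType) n : ext_mx (1%:M : 'M[{fps k}]_n) = 1%:M.
Proof. by apply/matrixP => a b; rewrite !mxE rmorph_nat. Qed.

Lemma ext_pid (k : fieldType) m n r : ext_mx (pid_mx r : 'M[{fps k}]_(m,n)) = pid_mx r.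
Proof. by apply/matrixP => a b; rewrite !mxE rmorph_nat. Qed.

Lemma ext_mxM (k : fieldType) m n p (A : 'M[{fps k}]_(m,n)) (B : 'M_(n,p)) :
  ext_mx (A *m B) = ext_mx A *m ext_mx B.
Proof. by rewrite /ext_mx map_mxM. Qed.

Definition psiK (k : fieldType) : {rmorphism {poly k} -> {laurent k}} :=
  (@tofrac _) \o (@pfps k).

Lemma psiK_inj (k : fieldType) : injective (psiK k).
Proof.
move=> p q /= /eqP; rewrite tofrac_eq => /eqP; exact: pfps_inj.
Qed.

Unset Implicit Arguments.

Theorem mainTheorem10 (k : fieldType) (h l : nat) (hs : nat -> nat)
    (Ms : forall i : nat, 'M[{fps k}]_(hs i, h))
    (Lbar : 'M[k]_h) (d' : nat -> nat) :
  (* 0 = M_0 ⊆ M_1 ⊆ ... ⊆ M_l = M, each M_i a direct summand, free of rank h_i *)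
  hs 0%N = 0%N ->
  (forall i, (i <= l)%N -> basis_of_direct_summand (Ms i)) ->
  (forall i, (i < l)%N -> submod (Ms i) (Ms i.+1)) ->
  submod (1%:M : 'M[{fps k}]_h) (Ms l) ->
  (* the integers d'_i *)
  d' 0%N = 0%N ->
  d' l = \rank (Lbar :&: red_mx (Ms l))%MS ->
  (forall i, (i < l)%N ->
     (d' i <= d' i.+1)%N /\ (d' i.+1 + hs i <= d' i + hs i.+1)%N) ->
  (forall i, (1 <= i < l)%N -> (d' i <= \rank (Lbar :&: red_mx (Ms i))%MS)%N) ->
  exists (r : nat) (L : 'M[{fps k}]_(r, h)),
    [/\ basis_of_direct_summand L,
        (red_mx L == Lbar)%MS &
        forall i, (1 <= i <= l)%N ->
          \rank (ext_mx L :&: ext_mx (Ms i))%MS = d' i].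
Proof.
move=> H0 Hb Hsub Hfull Hd0 Hdl Hstep Hdle.
have bds i : (i <= l)%N -> (hs i <= h)%N /\ row_free (red_mx (Ms i)).
  by move=> il; exact: red_of_bds (Hb i il).
have mono i j : (i <= j <= l)%N -> (d' i <= d' j)%N /\ (hs i <= hs j)%N.
  by move=> ij; exact: (mono_dh Hd0 (erefl (d' l)) (erefl (hs l)) Hstep ij).
have hmono i j : (i <= j <= l)%N -> (hs i <= hs j)%N by move=> ij; have [] := mono i j ij.
have rkW i : (i <= l)%N -> \rank (red_mx (Ms i)) = hs i.
  by move=> il; have [_ /eqP] := bds i il.
have hsl : hs l = h.
  have [hl _] := bds l (leqnn l).
  have [Cc eC] := Hfull; have := congr1 (@red_mx k _ _) eC.
  rewrite /red_mx map_mxM map_mx1 -!/(red_mx _) => e.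
  have := mxrankM_maxr (red_mx Cc) (red_mx (Ms l)).
  by rewrite -e mxrank1 rkW //; lia.
have Wmono i : (i < l)%N -> (red_mx (Ms i) <= red_mx (Ms i.+1))%MS.
  move=> il; have [Cc ->] := Hsub i il; rewrite /red_mx map_mxM; exact: submxMl.
pose W i := (<<red_mx (Ms i)>>)%MS.
have W0 : \rank (W 0%N) = 0%N by rewrite /W genmxE rkW.
have Wmono' i : (i < l)%N -> (W i <= W i.+1)%MS by move=> il; rewrite /W !genmxE Wmono.
have [Qbar [QbU HQb]] := @flag_gen k h l W W0 Wmono'.
have HQb' i : (i <= l)%N -> ((pid_mx (hs i) : 'M_h) *m Qbar == red_mx (Ms i))%MS.
  by move=> il; have := HQb i il; rewrite /W !genmxE rkW.
have HQ i : (i <= l)%N -> ((pid_mx (hs i) : 'M_h) *m Qbar <= red_mx (Ms i))%MS.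
  by move=> il; have /andP[] := HQb' i il.
have [Q [redQ HZ]] := lift_Q H0 hsl hmono Hsub HQ.
have QU : Q \in unitmx by apply: red_unit; rewrite redQ.
have eQU : ext_mx Q \in unitmx.
  have e : ext_mx Q *m ext_mx (invmx Q) = 1%:M.
    by rewrite -ext_mxM (mulmxV QU) ext_mx1.
  exact: (mulmx1_unit e).1.
have Hext i : (i <= l)%N -> ((pid_mx (hs i) : 'M_h) *m ext_mx Q == ext_mx (Ms i))%MS.
  move=> il; have [Z eZ] := HZ i il.
  have e1 : (pid_mx (hs i) : 'M_h) *m ext_mx Q = ext_mx (pid_mx (hs i) *m Q).
    by rewrite ext_mxM ext_pid.
  have s1 : ((pid_mx (hs i) : 'M_h) *m ext_mx Q <= ext_mx (Ms i))%MS.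
    by rewrite e1 eZ ext_mxM submxMl.
  have eQrf : row_free (ext_mx Q) by rewrite row_free_unit; exact: eQU.
  have [hi _] := bds i il.
  rewrite -(mxrank_leqif_eq s1).2 (mxrankMfree _ eQrf) (@rank_pid_mx {laurent k} h h (hs i) hi hi).
  rewrite eqn_leq rank_leq_row andbT.
  apply: leq_trans (mxrankS s1).
  by rewrite (mxrankMfree _ eQrf) (@rank_pid_mx {laurent k} h h (hs i) hi hi).
pose Lb := Lbar *m invmx Qbar.
have LbQ : Lb *m Qbar = Lbar by rewrite /Lb (mulmxKV QbU).
pose S i := (Lb :&: (pid_mx (hs i) : 'M_h))%MS.
have rkS i : (i <= l)%N -> \rank (S i) = \rank (Lbar :&: red_mx (Ms i))%MS.
  move=> il; rewrite /S -(cap_rankM _ _ QbU) LbQ.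
  exact: (cap_eqmx (eqmx_refl Lbar) (eqmxP (HQb' i il))).1.
have S0 : \rank (S 0%N) = 0%N.
  have s0 : (S 0%N <= (0 : 'M[k]_h))%MS by rewrite /S /= H0 pid_mx_0 capmxSr.
  by apply/eqP; rewrite -leqn0; have := mxrankS s0; rewrite mxrank0.
have Smono i : (i < l)%N -> (S i <= S i.+1)%MS.
  move=> il; apply: capmxS => //.
  have h1 : (hs i <= hs i.+1)%N by apply: hmono; rewrite leqnSn il.
  have [h2 _] := bds i.+1 il.
  rewrite -(minn_idPl h1) -pidpid //; first exact: submxMl.
  exact: leq_trans h2.
have [Qc [QcU HQc]] := @flag_gen k h l S S0 Smono.
pose r := d' l.
have rS : \rank (S l) = r by rewrite rkS // /r Hdl.
have dS i : (i <= l)%N -> (d' i <= \rank (S i))%N.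
  move=> il; case: (posnP i) => [->|i0]; first by rewrite Hd0.
  case: (ltngtP i l) => il'.
  - by rewrite rkS // Hdle // i0 il'.
  - lia.
  - by rewrite il' rS.
have rh : (r <= h)%N by rewrite -rS rank_leq_col.
pose C := (pid_mx r : 'M[k]_(r,h)) *m Qc.
have HC i : (i <= l)%N ->
    (pid_mx (d' i) : 'M_r) *m C *m (copid_mx (hs i) : 'M_h) = 0.
  move=> il; have [dr _] := mono i l (introT andP (conj il (leqnn l))).
  have dSi := dS i il; have Sh : (\rank (S i) <= h)%N by rewrite rank_leq_col.
  have e1 : (pid_mx (d' i) : 'M_r) *m C =
      (pid_mx (d' i) : 'M_(r,h)) *m ((pid_mx (\rank (S i)) : 'M_h) *m Qc).
    rewrite /C !mulmxA !mul_pid_mx; congr (pid_mx _ *m Qc); lia.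
  have s : ((pid_mx (d' i) : 'M_r) *m C <= (pid_mx (hs i) : 'M_h))%MS.
    rewrite e1; apply: submx_trans (submxMl _ _) _.
    have /andP[s2 _] := HQc i il; apply: submx_trans s2 _; exact: capmxSr.
  have [hi _] := bds i il.
  by have /submxP[D ->] := s; rewrite -mulmxA mul_pid_mx_copid ?mulmx0.
have Qbrf : row_free Qbar by rewrite row_free_unit; exact: QbU.
have Qcrf : row_free Qc by rewrite row_free_unit; exact: QcU.
have rC : row_free C.
  by rewrite /row_free /C (mxrankMfree _ Qcrf) (@rank_pid_mx k r h r (leqnn r) rh).
pose L0 := map_mx (@pfps k) (Lp l hs d' C).
have redL : red_mx (L0 *m Q) = C *m Qbar.
  by rewrite /red_mx map_mxM -/(red_mx L0) -/(red_mx Q) redQ /L0 red_Lp.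
exists r, (L0 *m Q); split.
- apply: bds_of_red; rewrite redL /row_free (mxrankMfree _ Qbrf); exact: rC.
- rewrite redL; apply/eqmxP; rewrite -LbQ; apply: eqmxMr.
  have e2 : (C :=: (pid_mx r : 'M_h) *m Qc)%MS.
    apply/eqmxP/andP; split.
      have e4 : C = (pid_mx r : 'M_(r,h)) *m ((pid_mx r : 'M_h) *m Qc).
        by rewrite /C mulmxA mul_pid_mx minnn (minn_idPr rh).
      by rewrite e4 submxMl.
    have e5 : (pid_mx r : 'M[k]_h) *m Qc = (pid_mx r : 'M_(h,r)) *m C.
      by rewrite /C mulmxA mul_pid_mx !minnn.
    by rewrite e5 submxMl.
  apply: eqmx_trans e2 _.
  have := HQc l (leqnn l); rewrite rS => /eqmxP e3; apply: eqmx_trans e3 _.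
  by rewrite /S /= hsl pid_mx_1 capmx1.
- move=> i /andP[i1 il].
  have eL : ext_mx (L0 *m Q) = map_mx (psiK k) (Lp l hs d' C) *m ext_mx Q.
    by rewrite ext_mxM; congr (_ *m _); apply/matrixP => a b; rewrite !mxE.
  rewrite eL.
  set A := map_mx (psiK k) (Lp l hs d' C).
  rewrite (cap_eqmx (eqmx_refl _) (eqmx_sym (eqmxP (Hext i il)))).1.
  rewrite (cap_rankM _ _ eQU).
  have [hi _] := bds i il.
  have := mxrank_sum_cap A (pid_mx (hs i) : 'M_h).
  rewrite (sum_pid_rank _ hi) (@rank_pid_mx {laurent k} h h (hs i) hi hi).
  have RC := rank_Lp Hd0 (erefl r) hsl Hstep HC il (@psiK_inj k).
  rewrite map_mxM map_copid_mx -/A in RC; rewrite RC.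
  have RC0 := rank_Lp Hd0 (erefl r) hsl Hstep HC (leq0n l) (@psiK_inj k).
  rewrite map_mxM map_copid_mx -/A H0 /copid_mx pid_mx_0 subr0 mulmx1 Hd0 subn0 in RC0.
  rewrite RC0.
  have [dr _] := mono i l (introT andP (conj il (leqnn l))).
  have dr' : (d' i <= r)%N := dr.
  move=> e; set x := \rank (A :&: _)%MS in e *.
  lia.
Qed.
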